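(* Let $0<\alpha<1$. There exists a constant $C$ depending only on $\alpha$ such that for all $c\ge0$ and $n\ge0$ with $c^2/\chi_n(c)<\alpha$, $$\sup_{x\in[-1,1]}|\psi_{n,c}'(x)|\le C\,\chi_n(c)^{5/4},\qquad \sup_{x\in[-1,1]}(1-x^2)|\psi_{n,c}'(x)|\le C\,\sqrt{\chi_n(c)} .$$
   Context: Fix a bandwidth $c\ge 0$. The prolate spheroidal wave functions (PSWFs) $\psi_{n,c}$, $n\ge0$, are the solutions on $[-1,1]$, bounded as $|x|\to1^-$, of $\frac{d}{dx}\big[(1-x^2)\psi'(x)\big]+(\chi_n(c)-c^2x^2)\psi(x)=0$, where $0\le\chi_0(c)<\chi_1(c)<\cdots$ are the eigenvalues; $n(n+1)\le\chi_n(c)\le n(n+1)+c^2$. They are normalized by $\int_{-1}^1|\psi_{n,c}|^2dx=1$, $\psi_{n,c}$ has the parity of $n$, and $\psi_{n,c}(1)\ge0$. *)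

(* Defs.v *)
From Stdlib Require Import Reals Lra List.
Open Scope R_scope.

(* f is a solution on (-1,1) of the prolate ODE
     d/dx[(1-x^2) f'(x)] + (lam - c^2 x^2) f(x) = 0,
   which is regular (twice differentiable) up to and beyond x = +-1
   (PSWFs extend to entire functions; the singular solutions at +-1 are
   exactly the unbounded ones, so this is the "bounded as |x|->1" class). *)
Definition prolate_solution (c lam : R) (f : R -> R) : Prop :=
  exists d1 d2 : R -> R,
    (forall x, derivable_pt_lim f x (d1 x)) /\
    (forall x, derivable_pt_lim d1 x (d2 x)) /\
    (forall x, -1 < x < 1 ->
       (1 - x ^ 2) * d2 x - 2 * x * d1 x + (lam - c ^ 2 * x ^ 2) * f x = 0).

Definition prolate_eigenvalue (c lam : R) : Prop :=
  exists f : R -> R, prolate_solution c lam f /\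
    exists x, -1 <= x <= 1 /\ f x <> 0.

(* chi_n(c): the n-th eigenvalue (counting from 0) in increasing order,
   i.e. an eigenvalue with exactly n eigenvalues strictly below it. *)
Definition is_chi (c : R) (n : nat) (chi : R) : Prop :=
  prolate_eigenvalue c chi /\
  exists l : list R, length l = n /\ NoDup l /\
    (forall mu, In mu l <-> (prolate_eigenvalue c mu /\ mu < chi)).

Definition is_pswf (c : R) (n : nat) (chi : R) (psi : R -> R) : Prop :=
  is_chi c n chi /\
  prolate_solution c chi psi /\
  (exists pr : Riemann_integrable (fun x => psi x ^ 2) (-1) 1,
      RiemannInt pr = 1) /\
  (forall x, -1 <= x <= 1 -> psi (- x) = (-1) ^ n * psi x) /\
  0 <= psi 1.

(* Main.v *)
Require Import Defs.
From Stdlib Require Import Reals Lra Psatz.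
From Coquelicot Require Import Coquelicot.
Open Scope R_scope.

Definition sol (chi c : R) (f f1 f2 : R -> R) : Prop :=
  (forall y, derivable_pt_lim f y (f1 y)) /\
  (forall y, derivable_pt_lim f1 y (f2 y)) /\
  (forall y, -1 < y < 1 ->
     (1 - y ^ 2) * f2 y - 2 * y * f1 y + (chi - c ^ 2 * y ^ 2) * f y = 0).

Lemma mono_dec (g dg : R -> R) a b : a <= b ->
  (forall y, a <= y <= b -> derivable_pt_lim g y (dg y)) ->
  (forall y, a < y < b -> dg y <= 0) -> g b <= g a.
Proof.
  intros hab hd hs. destruct (Req_dec a b) as [->|hne]; [lra|].
  destruct (MVT_cor2 g dg a b) as [z [hz1 hz2]]; [lra|exact hd|].
  specialize (hs z hz2). nra.
Qed.

Lemma mono_inc (g dg : R -> R) a b : a <= b ->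
  (forall y, a <= y <= b -> derivable_pt_lim g y (dg y)) ->
  (forall y, a < y < b -> 0 <= dg y) -> g a <= g b.
Proof.
  intros hab hd hs. destruct (Req_dec a b) as [->|hne]; [lra|].
  destruct (MVT_cor2 g dg a b) as [z [hz1 hz2]]; [lra|exact hd|].
  specialize (hs z hz2). nra.
Qed.

Ltac nzt h := match goal with
 | |- _ /\ _ => split; nzt h
 | |- _ <> 0 => let E := fresh in intro E; apply h; rewrite <- E; ring
 | _ => idtac end.

Lemma isd (f : R -> R) y l : derivable_pt_lim f y l -> is_derive f y l.
Proof. intro h; now apply is_derive_Reals. Qed.
Lemma exd (f f1 : R -> R) y : (forall y, derivable_pt_lim f y (f1 y)) -> ex_derive f y.
Proof. intro h; exists (f1 y); now apply is_derive_Reals. Qed.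
Lemma Dv (f f1 : R -> R) y : (forall y, derivable_pt_lim f y (f1 y)) -> Derive (fun x => f x) y = f1 y.
Proof. intro h; apply is_derive_unique; now apply is_derive_Reals. Qed.

Definition QF (chi c : R) (f f1 : R -> R) y :=
  f y ^ 2 + (1 - y ^ 2) * f1 y ^ 2 / (chi - c ^ 2 * y ^ 2).
Definition dQF (chi c : R) (f f1 f2 : R -> R) y :=
  2 * f y * f1 y + ((-2*y) * f1 y ^ 2 + (1 - y^2) * (2 * f1 y * f2 y)) / (chi - c ^ 2 * y ^ 2)
  - (1 - y ^ 2) * f1 y ^ 2 * (- 2 * c^2 * y) / (chi - c ^ 2 * y ^ 2) ^ 2.

Lemma QF_der chi c f f1 f2 y : sol chi c f f1 f2 -> chi - c^2*y^2 <> 0 ->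
  derivable_pt_lim (QF chi c f f1) y (dQF chi c f f1 f2 y).
Proof.
  intros [h1 [h2 h3]] hq. apply is_derive_Reals. unfold QF, dQF.
  auto_derive.
  - repeat split; try (eapply exd; eauto); try (intro E; apply hq; rewrite <- E; ring).
  - rewrite (Dv f f1 y h1), (Dv f1 f2 y h2). field. nzt hq.
Qed.

Lemma ode_f2 chi c f f1 f2 y : sol chi c f f1 f2 -> -1 < y < 1 ->
  f2 y = (2 * y * f1 y - (chi - c^2*y^2) * f y) / (1 - y^2).
Proof.
  intros [_ [_ h]] hy. specialize (h y hy).
  assert (0 < 1 - y^2) by nra. field_simplify_eq; [|lra]. lra.
Qed.

Lemma dQF_nonneg chi c f f1 f2 y : sol chi c f f1 f2 -> 0 < y < 1 ->
  0 < chi - c^2*y^2 -> 0 <= dQF chi c f f1 f2 y.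
Proof.
  intros hs hy hq. unfold dQF. rewrite (ode_f2 chi c f f1 f2 y hs); [|lra].
  assert (hp : 0 < 1 - y^2) by nra.
  replace (2 * f y * f1 y +
   (-2 * y * f1 y ^ 2 +
    (1 - y ^ 2) * (2 * f1 y * ((2 * y * f1 y - (chi - c ^ 2 * y ^ 2) * f y) / (1 - y ^ 2)))) /
   (chi - c ^ 2 * y ^ 2) -
   (1 - y ^ 2) * f1 y ^ 2 * (-2 * c ^ 2 * y) / (chi - c ^ 2 * y ^ 2) ^ 2)
   with (2 * y * f1 y ^ 2 / (chi - c^2*y^2) + 2 * c^2 * y * (1 - y^2) * f1 y ^2 / (chi - c^2*y^2)^2)
   by (field; split; lra).
  apply Rplus_le_le_0_compat; unfold Rdiv; apply Rmult_le_pos;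
  try (left; apply Rinv_0_lt_compat; try apply pow_lt; lra).
  - assert (0 <= f1 y ^ 2) by nra. nra.
  - assert (0 <= f1 y ^ 2) by nra. assert (0 <= c^2) by nra. 
    apply Rmult_le_pos; [|lra]. apply Rmult_le_pos; [|lra]. nra.
Qed.

Lemma Q_mono chi c f f1 f2 x : sol chi c f f1 f2 ->
  (forall y, 0 <= y <= 1 -> 0 < chi - c^2*y^2) -> 0 <= x <= 1 ->
  QF chi c f f1 0 <= QF chi c f f1 x /\ QF chi c f f1 x <= f 1 ^ 2.
Proof.
  intros hs hq hx.
  assert (hQ1 : QF chi c f f1 1 = f 1 ^ 2) by (unfold QF; field; specialize (hq 1); lra).
  split.
  - apply (mono_inc _ (dQF chi c f f1 f2)); [lra| |].
    + intros y hy. apply QF_der; [auto|]. specialize (hq y); lra.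
    + intros y hy. apply dQF_nonneg; auto; [lra|]. apply hq; lra.
  - rewrite <- hQ1. apply (mono_inc _ (dQF chi c f f1 f2)); [lra| |].
    + intros y hy. apply QF_der; [auto|]. specialize (hq y); lra.
    + intros y hy. apply dQF_nonneg; auto; [lra|]. apply hq; lra.
Qed.

Definition VF (chi c : R) (f f1 : R -> R) y :=
  (1 - y^2) * (chi - c^2*y^2) * f y ^ 2 + (1 - y^2)^2 * f1 y ^ 2.
Definition dVF (chi c : R) (f f1 f2 : R -> R) y :=
  ((-2*y) * (chi - c^2*y^2) + (1-y^2) * (-2*c^2*y)) * f y ^ 2
  + (1 - y^2) * (chi - c^2*y^2) * (2 * f y * f1 y)
  + 2 * (1 - y^2) * (-2*y) * f1 y ^ 2 + (1-y^2)^2 * (2 * f1 y * f2 y).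

Lemma VF_der chi c f f1 f2 y : sol chi c f f1 f2 ->
  derivable_pt_lim (VF chi c f f1) y (dVF chi c f f1 f2 y).
Proof.
  intros [h1 [h2 h3]]. apply is_derive_Reals. unfold VF, dVF.
  auto_derive.
  - repeat split; try (eapply exd; eauto).
  - rewrite (Dv f f1 y h1), (Dv f1 f2 y h2). ring.
Qed.

Lemma V_mono chi c f f1 f2 a b : sol chi c f f1 f2 ->
  (forall y, 0 <= y <= 1 -> 0 <= chi - c^2*y^2) -> 0 <= a <= b -> b <= 1 ->
  VF chi c f f1 b <= VF chi c f f1 a.
Proof.
  intros hs hq hab hb.
  apply (mono_dec _ (dVF chi c f f1 f2)); [lra| |].
  - intros y hy. apply VF_der; auto.
  - intros y hy. unfold dVF. rewrite (ode_f2 chi c f f1 f2 y hs); [|lra].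
    assert (hp : 0 < 1 - y^2) by nra. specialize (hq y ltac:(lra)).
    replace (((-2*y) * (chi - c^2*y^2) + (1-y^2) * (-2*c^2*y)) * f y ^ 2
      + (1 - y^2) * (chi - c^2*y^2) * (2 * f y * f1 y)
      + 2 * (1 - y^2) * (-2*y) * f1 y ^ 2 + (1-y^2)^2 * (2 * f1 y *
       ((2 * y * f1 y - (chi - c ^ 2 * y ^ 2) * f y) / (1 - y ^ 2))))
    with (- (2*y) * ((chi - c^2*y^2) + c^2 * (1-y^2)) * f y ^ 2) by (field; lra).
    assert (0 <= f y ^ 2) by nra. assert (0 <= c^2 * (1-y^2)) by nra.
    assert (0 <= ((chi - c^2*y^2) + c^2 * (1-y^2)) * f y ^ 2) by (apply Rmult_le_pos; lra).
    nra.
Qed.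

Lemma sq_le_abs a b : a ^ 2 <= b ^ 2 -> Rabs a <= Rabs b.
Proof.
  intro h. rewrite <- (pow2_abs a), <- (pow2_abs b) in h.
  pose proof (Rabs_pos a); pose proof (Rabs_pos b). nra.
Qed.

Lemma cont_bound (g : R -> R) a b B : a < b -> continuity_pt g b ->
  (forall y, a <= y < b -> Rabs (g y) <= B) -> Rabs (g b) <= B.
Proof.
  intros hab hc hb. destruct (Rle_dec (Rabs (g b)) B) as [h|h]; [exact h|].
  exfalso. apply Rnot_le_lt in h.
  destruct (hc (Rabs (g b) - B)) as [d [hd hd2]]; [lra|].
  set (y := Rmax a (b - d/2)).
  assert (hy1 : a <= y < b) by (unfold y; apply Rmax_case_strong; intros; lra).
  assert (hy2 : Rabs (y - b) < d).
  { unfold y; apply Rmax_case_strong; intros; rewrite Rabs_left; lra. }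
  specialize (hd2 y). simpl in hd2. unfold R_dist in hd2.
  assert (Rabs (g y - g b) < Rabs (g b) - B).
  { apply hd2. split; [unfold D_x, no_cond; split; [auto|lra]|exact hy2]. }
  specialize (hb y hy1).
  pose proof (Rabs_triang_inv (g b) (g y)).
  rewrite Rabs_minus_sym in H. lra.
Qed.

Definition dwF (f1 f2 : R -> R) y := -2 * y * f1 y + (1 - y^2) * f2 y.

Lemma w_der chi c f f1 f2 y : sol chi c f f1 f2 ->
  derivable_pt_lim (fun y => (1 - y^2) * f1 y) y (dwF f1 f2 y).
Proof.
  intros [h1 [h2 h3]]. apply is_derive_Reals. unfold dwF.
  auto_derive.
  - repeat split; try (eapply exd; eauto).
  - rewrite (Dv f1 f2 y h2). ring.
Qed.

Lemma f1_bound chi c f f1 f2 x : sol chi c f f1 f2 ->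
  (forall y, 0 <= y <= 1 -> 0 <= chi - c^2*y^2) ->
  (forall y, 0 <= y <= 1 -> Rabs (f y) <= Rabs (f 1)) -> 0 <= x <= 1 ->
  Rabs (f1 x) <= chi * Rabs (f 1).
Proof.
  intros hs hq hf hx.
  assert (hc : 0 <= c^2) by nra. assert (hchi : 0 <= chi) by (specialize (hq 0); lra).
  assert (main : forall x, 0 <= x < 1 -> Rabs (f1 x) <= chi * Rabs (f 1)).
  { clear x hx. intros x hx.
    destruct (MVT_cor2 (fun y => (1 - y^2) * f1 y) (dwF f1 f2) x 1) as [z [hz1 hz2]].
    { lra. }
    { intros; apply (w_der chi c f f1 f2); auto. }
    unfold dwF in hz1. destruct hs as [h1 [h2 h3]].
    assert (e : -2 * z * f1 z + (1 - z^2) * f2 z = - ((chi - c^2*z^2) * f z))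
      by (specialize (h3 z ltac:(lra)); lra).
    rewrite e in hz1.
    assert (hw : Rabs ((1 - x^2) * f1 x) <= chi * Rabs (f 1) * (1 - x)).
    { replace ((1 - x^2) * f1 x) with (((chi - c^2*z^2) * f z) * (1 - x)) by nra.
      rewrite Rabs_mult, Rabs_mult, (Rabs_right (1-x)) by lra.
      apply Rmult_le_compat_r; [lra|].
      rewrite Rabs_right by (apply Rle_ge, hq; lra).
      apply Rmult_le_compat; try apply Rabs_pos; [apply hq; lra| |apply hf; lra].
      nra. }
    rewrite Rabs_mult, Rabs_right in hw by nra.
    assert (Rabs (f1 x) * (1 + x) <= chi * Rabs (f 1)).
    { apply Rmult_le_reg_r with (1 - x); [lra|].
      replace (Rabs (f1 x) * (1 + x) * (1 - x)) with ((1 - x^2) * Rabs (f1 x)) by ring. lra. }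
    pose proof (Rabs_pos (f1 x)). nra. }
  destruct (Req_dec x 1) as [->|hne].
  - apply (cont_bound f1 0 1); [lra| |].
    + destruct hs as [h1 [h2 h3]]. apply derivable_continuous_pt. exists (f2 1). apply h2.
    + intros; apply main; lra.
  - apply main; lra.
Qed.

Lemma f_diff chi c f f1 f2 x B : sol chi c f f1 f2 ->
  (forall y, 0 <= y <= 1 -> Rabs (f1 y) <= B) -> 0 <= x <= 1 ->
  Rabs (f x - f 1) <= B * (1 - x).
Proof.
  intros [h1 _] hb hx. destruct (Req_dec x 1) as [->|hne].
  - rewrite Rminus_diag, Rabs_R0. ring_simplify. lra.
  - destruct (MVT_cor2 f f1 x 1) as [z [hz1 hz2]]; [lra|intros; apply h1|].
    rewrite Rabs_minus_sym, hz1, Rabs_mult, (Rabs_right (1 - x)) by lra.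
    apply Rmult_le_compat_r; [lra|]. apply hb; lra.
Qed.

Lemma Du (u : R -> R) y du : is_derive u y du -> Derive (fun x => u x) y = du.
Proof. intro h; now apply is_derive_unique. Qed.
Lemma Eu (u : R -> R) y du : is_derive u y du -> ex_derive (fun x => u x) y.
Proof. intro h; now exists du. Qed.

Lemma Phi_gen (A r B : R -> R) dA dr dB y : is_derive A y dA -> is_derive r y dr ->
  is_derive B y dB ->
  is_derive (fun y => (A y - r y * B y) * (2 - r y)) y
   ((dA - (dr * B y + r y * dB)) * (2 - r y) + (A y - r y * B y) * (- dr)).
Proof.
  intros hA hr hB. auto_derive.
  - repeat split; eapply Eu; eauto.
  - rewrite (Du A y dA hA), (Du r y dr hr), (Du B y dB hB). ring.
Qed.

Lemma FF_gen (s f w : R -> R) ds df dw y : is_derive s y ds -> is_derive f y df ->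
  is_derive w y dw -> s y <> 0 ->
  is_derive (fun y => s y * f y ^ 2 + w y ^ 2 / s y) y
   (ds * f y ^ 2 + s y * (2 * f y * df) + (2 * w y * dw * s y - w y ^ 2 * ds) / (s y)^2).
Proof.
  intros hs hf hw hs0. auto_derive.
  - repeat split; try (eapply Eu; eauto). exact hs0.
  - rewrite (Du s y ds hs), (Du f y df hf), (Du w y dw hw). field. exact hs0.
Qed.

Lemma rho_gen (N q s : R -> R) dN dq ds y : is_derive N y dN -> is_derive q y dq ->
  is_derive s y ds -> q y <> 0 -> s y <> 0 ->
  is_derive (fun y => N y / (q y * s y)) y
   ((dN * (q y * s y) - N y * (dq * s y + q y * ds)) / (q y * s y) ^ 2).
Proof.
  intros hN hq hs hq0 hs0. auto_derive.
  - repeat split; try (eapply Eu; eauto). apply Rmult_integral_contrapositive; auto.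
  - rewrite (Du N y dN hN), (Du q y dq hq), (Du s y ds hs). field. auto.
Qed.

Lemma prod_gen (f w : R -> R) df dw y : is_derive f y df -> is_derive w y dw ->
  is_derive (fun y => f y * w y) y (df * w y + f y * dw).
Proof.
  intros hf hw. auto_derive.
  - repeat split; eapply Eu; eauto.
  - rewrite (Du f y df hf), (Du w y dw hw). ring.
Qed.

Definition gg chi c y := (1 - y^2) * (chi - c^2*y^2).
Definition NN chi c y := y * ((chi - c^2*y^2) + c^2 * (1 - y^2)).

Lemma sqrt_gen (g : R -> R) dg y : is_derive g y dg -> 0 < g y ->
  is_derive (fun y => sqrt (g y)) y (dg / (2 * sqrt (g y))).
Proof.
  intros hg h. auto_derive.
  - split; [eapply Eu; eauto|]. split; [exact h|auto].
  - rewrite (Du g y dg hg). unfold Rdiv. ring.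
Qed.

Lemma gg_der chi c y : is_derive (gg chi c) y (-2 * NN chi c y).
Proof. unfold gg, NN. auto_derive; auto. ring. Qed.

Lemma sF_der chi c y : 0 < gg chi c y ->
  is_derive (fun y => sqrt (gg chi c y)) y (- NN chi c y / sqrt (gg chi c y)).
Proof.
  intro h. eapply is_derive_ext; [intro t; reflexivity|].
  replace (- NN chi c y / sqrt (gg chi c y)) with ((-2 * NN chi c y) / (2 * sqrt (gg chi c y))).
  - apply sqrt_gen; [apply gg_der|exact h].
  - assert (0 < sqrt (gg chi c y)) by (apply sqrt_lt_R0; auto). field. lra.
Qed.

Lemma NN_der chi c y : is_derive (NN chi c) y ((chi - c^2*y^2) + c^2*(1-y^2) - 4*c^2*y^2).
Proof. unfold NN. auto_derive; auto. ring. Qed.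
Lemma qq_der chi c y : is_derive (fun y => chi - c^2*y^2) y (-2*c^2*y).
Proof. auto_derive; auto. ring. Qed.
Lemma alg_FF (s p q c y f f1 f2 : R) : s <> 0 -> q <> 0 -> p <> 0 -> s * s = p * q ->
  p = 1 - y^2 -> p * f2 - 2 * y * f1 + q * f = 0 ->
  let N := y * (q + c^2 * p) in
  let sd := - N / s in
  let w := p * f1 in let dw := -2 * y * f1 + p * f2 in
  sd * f ^ 2 + s * (2 * f * f1) + (2 * w * dw * s - w ^ 2 * sd) / s ^ 2
  = N / (q * s) * (f1 * w + f * dw).
Proof.
  intros hs hq hp hss hpy hode N sd w dw.
  assert (e2 : f2 = (2 * y * f1 - q * f) / p) by (field_simplify_eq; lra).
  assert (e : dw = - q * f) by (unfold dw; rewrite e2; field; auto).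
  rewrite e. unfold sd, w.
  apply Rminus_diag_uniq.
  transitivity ((s * s - p * q) * (2 * f * f1 / s + (N / s) * (p * f1^2) / (s * s * q) * (-1))).
  - unfold N. field. auto.
  - rewrite hss. ring.
Qed.

Lemma alg_rho (s p q c y : R) : 0 < s -> 0 < q -> s * s = p * q -> p = 1 - y^2 ->
  let N := y * (q + c^2 * p) in
  let sd := - N / s in
  0 <= ((q + c^2 * p - 4 * c^2 * y^2) * (q * s) - N * ((-2 * c^2 * y) * s + q * sd)) / (q * s) ^ 2.
Proof.
  intros hs hq hss hp N sd.
  assert (hn : ((q + c^2 * p - 4 * c^2 * y^2) * (q * s) - N * ((-2 * c^2 * y) * s + q * sd))
     = q * (q^2 + c^2 * p^2 * q + 3 * c^4 * y^2 * p^2) / s).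
  { unfold sd. apply Rmult_eq_reg_r with s; [|lra].
    transitivity ((q + c^2 * p - 4 * c^2 * y^2) * q * (s * s) - N * (-2 * c^2 * y) * (s*s) + q * N^2).
    - field. lra.
    - rewrite hss. unfold N. rewrite hp. field. lra. }
  rewrite hn. apply Rmult_le_pos; [|left; apply Rinv_0_lt_compat; apply pow_lt; nra].
  unfold Rdiv. apply Rmult_le_pos; [|left; apply Rinv_0_lt_compat; lra].
  apply Rmult_le_pos; [lra|].
  assert (0 <= c^2 * p^2 * q) by (apply Rmult_le_pos; [nra|lra]).
  assert (0 <= 3 * c^4 * y^2 * p^2) by (assert (0 <= c^4) by (replace (c^4) with ((c^2)^2) by ring; nra); nra).
  nra.
Qed.

Lemma amgm (s f w : R) : 0 < s -> 2 * Rabs (f * w) <= s * f ^ 2 + w ^ 2 / s.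
Proof.
  intro hs. rewrite Rabs_mult.
  assert (e : s * f^2 + w^2/s = (s * Rabs f - Rabs w)^2 / s + 2 * (Rabs f * Rabs w)).
  { rewrite <- (pow2_abs f), <- (pow2_abs w). field. lra. }
  rewrite e.
  assert (0 <= (s * Rabs f - Rabs w)^2 / s).
  { unfold Rdiv; apply Rmult_le_pos; [apply pow2_ge_0|left; apply Rinv_0_lt_compat; lra]. }
  lra.
Qed.

Definition sF chi c y := sqrt (gg chi c y).
Definition rhoF chi c y := NN chi c y / ((chi - c^2*y^2) * sF chi c y).
Definition FF chi c (f f1 : R -> R) y :=
  sF chi c y * f y ^ 2 + ((1 - y^2) * f1 y) ^ 2 / sF chi c y.
Definition PhiF chi c (f f1 : R -> R) y :=
  (FF chi c f f1 y - rhoF chi c y * (f y * ((1 - y^2) * f1 y))) * (2 - rhoF chi c y).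

Definition sdF chi c y := - NN chi c y / sF chi c y.
Definition rhod chi c y :=
  (((chi - c^2*y^2) + c^2*(1-y^2) - 4*c^2*y^2) * ((chi - c^2*y^2) * sF chi c y)
   - NN chi c y * ((-2*c^2*y) * sF chi c y + (chi - c^2*y^2) * sdF chi c y))
   / ((chi - c^2*y^2) * sF chi c y) ^ 2.
Definition FFd chi c (f f1 f2 : R -> R) y :=
  sdF chi c y * f y ^ 2 + sF chi c y * (2 * f y * f1 y) +
  (2 * ((1 - y^2) * f1 y) * dwF f1 f2 y * sF chi c y - ((1 - y^2) * f1 y) ^ 2 * sdF chi c y)
   / (sF chi c y) ^ 2.
Definition fwd (f f1 f2 : R -> R) y := f1 y * ((1 - y^2) * f1 y) + f y * dwF f1 f2 y.
Definition dPhi chi c (f f1 f2 : R -> R) y :=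
  (FFd chi c f f1 f2 y - (rhod chi c y * (f y * ((1 - y^2) * f1 y)) + rhoF chi c y * fwd f f1 f2 y))
   * (2 - rhoF chi c y)
  + (FF chi c f f1 y - rhoF chi c y * (f y * ((1 - y^2) * f1 y))) * (- rhod chi c y).

Lemma Phi_der chi c f f1 f2 y : sol chi c f f1 f2 -> 0 < gg chi c y -> chi - c^2*y^2 <> 0 ->
  derivable_pt_lim (PhiF chi c f f1) y (dPhi chi c f f1 f2 y).
Proof.
  intros hs hg hq. pose proof hs as [h1 [h2 h3]].
  assert (hsp : 0 < sF chi c y) by (apply sqrt_lt_R0; auto).
  apply is_derive_Reals. unfold PhiF, dPhi.
  assert (hsd : is_derive (sF chi c) y (sdF chi c y)) by (apply sF_der; auto).
  assert (hw : is_derive (fun y => (1 - y^2) * f1 y) y (dwF f1 f2 y))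
    by (apply is_derive_Reals; exact (w_der chi c f f1 f2 y hs)).
  apply (Phi_gen (FF chi c f f1) (rhoF chi c) (fun y => f y * ((1 - y^2) * f1 y))).
  - unfold FF, FFd. apply (FF_gen (sF chi c) f (fun y => (1 - y^2) * f1 y)); auto.
    + apply isd; auto.
    + lra.
  - unfold rhoF, rhod. apply (rho_gen (NN chi c) (fun y => chi - c^2*y^2) (sF chi c)); auto.
    + apply NN_der.
    + apply qq_der.
    + lra.
  - unfold fwd. apply (prod_gen f (fun y => (1 - y^2) * f1 y)); auto. apply isd; auto.
Qed.

Lemma Phi_mono chi c f f1 f2 x1 : sol chi c f f1 f2 ->
  (forall y, 0 <= y <= 1 -> 0 < chi - c^2*y^2) -> 0 <= x1 < 1 ->
  (forall y, 0 <= y <= x1 -> rhoF chi c y <= 1) ->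
  PhiF chi c f f1 x1 <= PhiF chi c f f1 0.
Proof.
  intros hs hq hx1 hr.
  assert (hg : forall y, 0 <= y <= x1 -> 0 < gg chi c y).
  { intros y hy. unfold gg. apply Rmult_lt_0_compat; [nra|apply hq; lra]. }
  apply (mono_dec _ (dPhi chi c f f1 f2)); [lra| |].
  - intros y hy. apply Phi_der; auto. specialize (hq y ltac:(lra)); lra.
  - intros y hy. specialize (hq y ltac:(lra)). specialize (hg y ltac:(lra)).
    specialize (hr y ltac:(lra)).
    assert (hsp : 0 < sF chi c y) by (apply sqrt_lt_R0; auto).
    assert (hss : sF chi c y * sF chi c y = (1 - y^2) * (chi - c^2*y^2))
      by (unfold sF; rewrite sqrt_sqrt; [unfold gg; ring|lra]).
    destruct hs as [h1 [h2 h3]]. specialize (h3 y ltac:(lra)).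
    assert (eF : FFd chi c f f1 f2 y = rhoF chi c y * fwd f f1 f2 y).
    { unfold FFd, rhoF, fwd, sdF, NN, dwF.
      apply (alg_FF (sF chi c y) (1 - y^2) (chi - c^2*y^2) c y (f y) (f1 y) (f2 y)); try lra.
      nra. }
    assert (er : 0 <= rhod chi c y).
    { unfold rhod, sdF, NN.
      apply (alg_rho (sF chi c y) (1 - y^2) (chi - c^2*y^2) c y); auto. }
    assert (erho : 0 <= rhoF chi c y).
    { unfold rhoF, NN. apply Rmult_le_pos.
      - apply Rmult_le_pos; [lra|]. assert (0 <= c^2 * (1 - y^2)) by nra. lra.
      - left; apply Rinv_0_lt_compat, Rmult_lt_0_compat; lra. }
    pose proof (amgm (sF chi c y) (f y) ((1 - y^2) * f1 y) hsp) as ham.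
    unfold dPhi. rewrite eF. fold (FF chi c f f1 y) in ham.
    set (fw := f y * ((1 - y ^ 2) * f1 y)) in *.
    set (F := FF chi c f f1 y) in *. set (r := rhoF chi c y) in *. set (d := rhod chi c y) in *.
    replace ((r * fwd f f1 f2 y - (d * fw + r * fwd f f1 f2 y)) * (2 - r) + (F - r * fw) * - d)
      with (- d * (F + 2 * fw * (1 - r))) by ring.
    assert (0 <= F + 2 * fw * (1 - r)).
    { pose proof (Rabs_pos fw). destruct (Rle_dec 0 fw).
      - nra.
      - rewrite Rabs_left in ham by lra. nra. }
    nra.
Qed.

Lemma VF0 chi c f f1 : 0 < chi -> VF chi c f f1 0 = chi * QF chi c f f1 0.
Proof. intro h. unfold VF, QF. field. lra. Qed.

Lemma PhiF0 chi c f f1 : 0 < chi -> PhiF chi c f f1 0 = 2 * sqrt chi * QF chi c f f1 0.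
Proof.
  intro h. unfold PhiF, FF, rhoF, NN, QF, sF, gg.
  replace ((1 - 0^2) * (chi - c^2 * 0^2)) with chi by ring.
  assert (hs : 0 < sqrt chi) by (apply sqrt_lt_R0; auto).
  pose proof (sqrt_sqrt chi ltac:(lra)) as hss.
  replace (0 * (chi - c ^ 2 * 0 ^ 2 + c ^ 2 * (1 - 0 ^ 2)) / ((chi - c ^ 2 * 0 ^ 2) * sqrt chi)) with 0
    by (field; lra).
  apply Rmult_eq_reg_r with (sqrt chi); [|lra].
  replace ((sqrt chi * f 0 ^ 2 + ((1 - 0 ^ 2) * f1 0) ^ 2 / sqrt chi - 0 * (f 0 * ((1 - 0 ^ 2) * f1 0))) *
   (2 - 0) * sqrt chi) with (2 * (sqrt chi * sqrt chi * f 0 ^ 2 + f1 0 ^ 2)) by (field; lra).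
  replace (2 * sqrt chi * (f 0 ^ 2 + (1 - 0 ^ 2) * f1 0 ^ 2 / (chi - c ^ 2 * 0 ^ 2)) * sqrt chi)
    with (2 * (sqrt chi * sqrt chi) * (f 0 ^ 2 + f1 0 ^ 2 / chi)) by (field; lra).
  rewrite hss. field. lra.
Qed.

Lemma VF_sF chi c f f1 y : 0 < gg chi c y ->
  VF chi c f f1 y = sF chi c y * FF chi c f f1 y.
Proof.
  intro h. unfold VF, FF, sF.
  assert (hs : 0 < sqrt (gg chi c y)) by (apply sqrt_lt_R0; auto).
  pose proof (sqrt_sqrt (gg chi c y) ltac:(lra)) as hss.
  set (s := sqrt (gg chi c y)) in *.
  rewrite Rmult_plus_distr_l.
  replace (s * (((1 - y ^ 2) * f1 y) ^ 2 / s)) with (((1 - y ^ 2) * f1 y) ^ 2) by (field; lra).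
  replace (s * (s * f y ^ 2)) with ((s * s) * f y ^ 2) by ring. rewrite hss. unfold gg. ring.
Qed.

Lemma half0 chi c f f1 f2 : sol chi c f f1 f2 -> 0 < chi ->
  (forall y, 0 <= y <= 1 -> 0 < chi - c^2*y^2) ->
  (forall x, 0 <= x <= 1 -> Rabs (f x) <= Rabs (f 1)) /\
  (forall x, 0 <= x <= 1 -> Rabs (f1 x) <= chi * Rabs (f 1)) /\
  (forall x, 0 <= x <= 1 -> Rabs (f x - f 1) <= chi * Rabs (f 1) * (1 - x)) /\
  (forall x, 0 <= x <= 1 -> QF chi c f f1 0 <= QF chi c f f1 x).
Proof.
  intros hs hchi hq.
  assert (hf : forall x, 0 <= x <= 1 -> Rabs (f x) <= Rabs (f 1)).
  { intros x hx. apply sq_le_abs. destruct (Q_mono chi c f f1 f2 x hs hq hx) as [_ h].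
    unfold QF in h. assert (0 <= (1 - x^2) * f1 x ^ 2 / (chi - c^2*x^2)).
    { unfold Rdiv. apply Rmult_le_pos; [apply Rmult_le_pos; [nra|apply pow2_ge_0]|].
      left; apply Rinv_0_lt_compat, hq; auto. }
    lra. }
  assert (hf1 : forall x, 0 <= x <= 1 -> Rabs (f1 x) <= chi * Rabs (f 1)).
  { intros x hx. apply (f1_bound chi c f f1 f2); auto. intros y hy; left; auto. }
  split; [auto|]. split; [auto|]. split.
  - intros x hx. apply (f_diff chi c f f1 f2); auto.
  - intros x hx. apply (Q_mono chi c f f1 f2 x hs hq hx).
Qed.

Lemma one_m_sq y : -1 <= y <= 1 -> 0 <= 1 - y^2.
Proof. intro h. replace (1 - y^2) with ((1-y)*(1+y)) by ring. apply Rmult_le_pos; lra. Qed.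
Lemma c2p c y : -1 <= y <= 1 -> 0 <= c^2 * (1 - y^2).
Proof. intro h. apply Rmult_le_pos; [apply pow2_ge_0|apply one_m_sq; auto]. Qed.

Lemma rho_le1 chi c beta y : 0 < beta <= 1 -> 0 < chi -> 0 <= y < 1 ->
  beta * chi <= chi - c^2*y^2 -> c^2 <= chi ->
  4 / beta^3 <= (1 - y) * chi -> rhoF chi c y <= 1.
Proof.
  intros hb hchi hy hq hc hA.
  set (q := chi - c^2*y^2) in *. set (p := 1 - y^2).
  assert (hp : 1 - y <= p) by (unfold p; nra).
  assert (hqc : q <= chi) by (unfold q; assert (0 <= c^2*y^2) by (apply Rmult_le_pos; apply pow2_ge_0); lra).
  assert (hq0 : 0 < q) by nra.
  assert (hg : 0 < gg chi c y) by (unfold gg; fold q; fold p; apply Rmult_lt_0_compat; nra).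
  assert (hs : 0 < sF chi c y) by (apply sqrt_lt_R0; auto).
  assert (hss : sF chi c y * sF chi c y = p * q) by (unfold sF; rewrite sqrt_sqrt; [unfold gg; fold q; fold p; ring|lra]).
  unfold rhoF. fold q.
  set (s := sF chi c y) in *.
  assert (hN0 : 0 <= NN chi c y).
  { unfold NN. fold q. apply Rmult_le_pos; [lra|].
    assert (0 <= c^2 * (1 - y^2)) by (apply Rmult_le_pos; [apply pow2_ge_0|unfold p in hp; lra]). lra. }
  assert (hN : NN chi c y <= 2 * chi).
  { unfold NN. fold q. clearbody q p s.
    assert (0 <= y^2 <= 1) by (split; nra). assert (0 <= c^2) by nra.
    assert (0 <= c^2 * (1 - y^2) <= c^2) by (split; nra).
    assert (0 <= q + c^2 * (1 - y^2) <= 2 * chi) by (split; lra). nra. }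
  clearbody q p s.
  assert (hb3 : 0 < beta ^ 3) by (apply pow_lt; lra).
  assert (hq3 : (beta * chi)^3 <= q ^ 3) by (apply pow_incr; nra).
  assert (hpA : 4 / beta^3 / chi <= p).
  { apply Rle_trans with (1 - y); [|lra]. apply Rmult_le_reg_r with chi; [lra|].
    unfold Rdiv at 1. rewrite Rmult_assoc, Rinv_l, Rmult_1_r by lra. lra. }
  assert (hkey : 4 * chi^2 <= q^3 * p).
  { apply Rle_trans with ((beta * chi)^3 * (4 / beta^3 / chi)).
    - right. field. lra.
    - apply Rmult_le_compat; try lra.
      + apply pow_le; nra.
      + left; unfold Rdiv; apply Rmult_lt_0_compat; [apply Rmult_lt_0_compat; [lra|]|];
          apply Rinv_0_lt_compat; lra. }
  assert (hqs : (q * s)^2 = q^3 * p) by (replace ((q*s)^2) with (q^2 * (s*s)) by ring; rewrite hss; ring).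
  assert (hle : NN chi c y <= q * s).
  { assert (0 < q * s) by (apply Rmult_lt_0_compat; lra). nra. }
  apply Rmult_le_reg_r with (q * s); [apply Rmult_lt_0_compat; lra|].
  unfold Rdiv. rewrite Rmult_assoc, Rinv_l, Rmult_1_r, Rmult_1_l; [lra|].
  apply Rgt_not_eq, Rmult_lt_0_compat; lra.
Qed.

Lemma half chi c f f1 f2 beta K : sol chi c f f1 f2 -> 0 < beta <= 1 -> 1 <= chi ->
  (forall y, 0 <= y <= 1 -> beta * chi <= chi - c^2*y^2) -> 0 <= c ->
  QF chi c f f1 0 <= K ->
  (forall x, 0 <= x <= 1 -> (1 - x^2) * Rabs (f1 x) <= sqrt (K * chi)) /\
  Rabs (f 1) ^ 2 <= 64 * (4 / beta^3) * K / beta * sqrt chi.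
Proof.
  intros hs hb hchi hq hc hK.
  assert (hq' : forall y, 0 <= y <= 1 -> 0 < chi - c^2*y^2).
  { intros y hy; specialize (hq y hy). nra. }
  assert (hq0 : forall y, 0 <= y <= 1 -> 0 <= chi - c^2*y^2) by (intros; left; auto).
  destruct (half0 chi c f f1 f2 hs ltac:(lra) hq') as [hf [hf1 [hfd hQ]]].
  assert (hV0 : VF chi c f f1 0 <= K * chi) by (rewrite VF0 by lra; nra).
  assert (hK0 : 0 <= K).
  { apply Rle_trans with (QF chi c f f1 0); [|auto]. unfold QF.
    assert (0 <= (1 - 0 ^ 2) * f1 0 ^ 2 / (chi - c ^ 2 * 0 ^ 2)).
    { unfold Rdiv; apply Rmult_le_pos; [apply Rmult_le_pos; [lra|apply pow2_ge_0]|].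
      left; apply Rinv_0_lt_compat, hq'; lra. }
    pose proof (pow2_ge_0 (f 0)). lra. }
  split.
  - intros x hx. pose proof (V_mono chi c f f1 f2 0 x hs hq0 ltac:(lra) ltac:(lra)) as hv.
    unfold VF in hv. fold (VF chi c f f1 0) in hv.
    assert (0 <= (1 - x ^ 2) * (chi - c ^ 2 * x ^ 2) * f x ^ 2).
    { apply Rmult_le_pos; [apply Rmult_le_pos; [nra|apply hq0; auto]|apply pow2_ge_0]. }
    assert (h2 : ((1 - x^2) * Rabs (f1 x)) ^ 2 <= K * chi).
    { rewrite Rpow_mult_distr, pow2_abs. lra. }
    rewrite <- (sqrt_pow2 ((1 - x^2) * Rabs (f1 x))).
    + apply sqrt_le_1_alt. exact h2.
    + apply Rmult_le_pos; [nra|apply Rabs_pos].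
  - set (M := Rabs (f 1)) in *.
    assert (hM : 0 <= M) by apply Rabs_pos.
    assert (hMdef : M = Rabs (f 1)) by reflexivity. clearbody M.
    assert (hb3 : 0 < beta ^ 3) by (apply pow_lt; lra).
    assert (hb31 : beta ^ 3 <= 1).
    { replace 1 with (1 ^ 3) by ring. apply pow_incr. lra. }
    set (A := 4 / beta^3).
    assert (hA : 4 <= A).
    { unfold A. apply Rmult_le_reg_r with (beta ^ 3); [lra|].
      unfold Rdiv. rewrite Rmult_assoc, Rinv_l by lra. nra. }
    assert (hAdef : A = 4 / beta^3) by reflexivity.
    clearbody A.
    set (x2 := 1 - 1 / (2 * chi)).
    assert (hx2 : 1/2 <= x2 < 1).
    { unfold x2. assert (0 < 1 / (2 * chi) <= 1/2); [|lra].
      split; [apply Rdiv_lt_0_compat; lra|].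
      apply Rmult_le_reg_r with (2 * chi); [lra|]. field_simplify; lra. }
    assert (hfx2 : M / 2 <= Rabs (f x2)).
    { specialize (hfd x2 ltac:(lra)).
      replace (chi * M * (1 - x2)) with (M / 2) in hfd by (unfold x2; field; lra).
      pose proof (Rabs_triang_inv (f 1) (f x2)). rewrite Rabs_minus_sym in hfd.
      rewrite <- hMdef in H. lra. }
    assert (ex2 : 1 - x2 = 1 / (2 * chi)) by (unfold x2; ring).
    clearbody x2.
    assert (hV2 : beta * M^2 / 8 <= VF chi c f f1 x2).
    { unfold VF.
      assert (h1 : 0 <= (1 - x2 ^ 2) ^ 2 * f1 x2 ^ 2) by (apply Rmult_le_pos; apply pow2_ge_0).
      assert (h2 : 1 / (2 * chi) <= 1 - x2^2).
      { replace (1 - x2^2) with ((1-x2)*(1+x2)) by ring. rewrite ex2.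
        assert (0 < 1/(2*chi)) by (apply Rdiv_lt_0_compat; lra). nra. }
      assert (h3 : beta * chi <= chi - c ^ 2 * x2 ^ 2) by (apply hq; lra).
      assert (h4 : (M/2)^2 <= f x2 ^ 2) by (rewrite <- (pow2_abs (f x2)); apply pow_incr; lra).
      assert (h5 : 1 / (2 * chi) * (beta * chi) * (M/2)^2 <= (1 - x2^2) * (chi - c^2*x2^2) * f x2^2).
      { assert (hd : 0 < 1 / (2 * chi)) by (apply Rdiv_lt_0_compat; lra).
        apply Rmult_le_compat.
        - apply Rmult_le_pos; [lra|apply Rmult_le_pos; lra].
        - apply pow2_ge_0.
        - apply Rmult_le_compat; [lra|apply Rmult_le_pos; lra|exact h2|exact h3].
        - exact h4. }
      replace (beta * M^2 / 8) with (1 / (2 * chi) * (beta * chi) * (M/2)^2) by (field; lra).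
      lra. }
    assert (hsq1 : 1 <= sqrt chi).
    { rewrite <- sqrt_1. apply sqrt_le_1_alt. lra. }
    assert (hsq : sqrt chi * sqrt chi = chi) by (apply sqrt_sqrt; lra).
    destruct (Rle_dec chi A) as [hsmall|hlarge].
    +
      pose proof (V_mono chi c f f1 f2 0 x2 hs hq0 ltac:(lra) ltac:(lra)) as hv.
      assert (hM2 : beta * M^2 <= 8 * K * chi) by lra.
      assert (hchiA : chi <= A * sqrt chi) by nra.
      apply Rmult_le_reg_r with beta; [lra|].
      replace (64 * A * K / beta * sqrt chi * beta) with (64 * A * K * sqrt chi) by (field; lra).
      assert (K * chi <= K * (A * sqrt chi)) by (apply Rmult_le_compat_l; lra).
      assert (0 <= K * A * sqrt chi) by (apply Rmult_le_pos; [nra|lra]).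
      nra.
    +
      apply Rnot_le_lt in hlarge.
      set (x1 := 1 - A / chi).
      assert (hx1def : x1 = 1 - A/chi) by reflexivity. clearbody x1.
      assert (hx1 : 0 < x1 < 1).
      { rewrite hx1def. split.
        - assert (A / chi < 1); [|lra]. apply Rmult_lt_reg_r with chi; [lra|].
          unfold Rdiv; rewrite Rmult_assoc, Rinv_l by lra. lra.
        - assert (0 < A / chi) by (apply Rdiv_lt_0_compat; lra). lra. }
      assert (hx12 : x1 <= x2).
      { rewrite hx1def. replace x2 with (1 - 1/(2*chi)) by lra. assert (1 / (2 * chi) <= A / chi); [|lra].
        replace (1 / (2 * chi)) with ((1/2) * / chi) by (field; lra).
        unfold Rdiv at 2. apply Rmult_le_compat_r; [left; apply Rinv_0_lt_compat; lra|lra]. }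
      assert (hc2 : c^2 <= chi) by (specialize (hq 1 ltac:(lra)); nra).
      assert (hrho : forall y, 0 <= y <= x1 -> rhoF chi c y <= 1).
      { intros y hy. apply (rho_le1 chi c beta y); try lra.
        - apply hq; lra.
        - rewrite hx1def in hy. rewrite <- hAdef. apply Rmult_le_reg_r with (/ chi).
          + apply Rinv_0_lt_compat; lra.
          + replace ((1 - y) * chi * / chi) with (1 - y) by (field; lra).
            change (A / chi <= 1 - y). lra. }
      pose proof (Phi_mono chi c f f1 f2 x1 hs hq' ltac:(lra) hrho) as hPhi.
      rewrite PhiF0 in hPhi by lra.
      assert (hg1 : 0 < gg chi c x1).
      { unfold gg. apply Rmult_lt_0_compat; [nra|apply hq'; lra]. }
      assert (hs1 : 0 < sF chi c x1) by (apply sqrt_lt_R0; auto).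
      assert (hss1 : sF chi c x1 * sF chi c x1 = gg chi c x1) by (apply sqrt_sqrt; lra).
      assert (hsle : sF chi c x1 <= 2 * A).
      { assert (gg chi c x1 <= 2 * A).
        { unfold gg. assert (1 - x1^2 <= 2 * (1 - x1)) by nra.
          assert (chi - c^2 * x1^2 <= chi) by nra.
          assert ((1 - x1^2) * (chi - c^2*x1^2) <= 2 * (1 - x1) * chi).
          { apply Rmult_le_compat; try nra. apply hq0; lra. }
          replace (2 * (1 - x1) * chi) with (2 * A) in H1 by (rewrite hx1def; field; lra). lra. }
        nra. }
      assert (hF : 0 <= FF chi c f f1 x1 /\ FF chi c f f1 x1 <= 2 * PhiF chi c f f1 x1).
      { pose proof (amgm (sF chi c x1) (f x1) ((1 - x1^2) * f1 x1) hs1) as ham.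
        fold (FF chi c f f1 x1) in ham.
        assert (hr0 : 0 <= rhoF chi c x1).
        { unfold rhoF, NN. apply Rmult_le_pos.
          - apply Rmult_le_pos; [lra|]. assert (0 <= c^2 * (1 - x1^2)) by (apply c2p; lra).
            specialize (hq' x1 ltac:(lra)). lra.
          - left; apply Rinv_0_lt_compat, Rmult_lt_0_compat; [apply hq'; lra|lra]. }
        specialize (hrho x1 ltac:(lra)).
        unfold PhiF.
        set (fw := f x1 * ((1 - x1 ^ 2) * f1 x1)) in *.
        set (F := FF chi c f f1 x1) in *. set (r := rhoF chi c x1) in *.
        pose proof (Rabs_pos fw). pose proof (Rle_abs fw). pose proof (Rle_abs (- fw)).
        rewrite Rabs_Ropp in H1.
        assert (F - r * fw >= F / 2) by nra.
        split; nra. }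
      assert (hVx1 : VF chi c f f1 x1 = sF chi c x1 * FF chi c f f1 x1) by (apply VF_sF; auto).
      pose proof (V_mono chi c f f1 f2 x1 x2 hs hq0 ltac:(lra) ltac:(lra)) as hv.
      assert (hVle : VF chi c f f1 x1 <= 8 * A * K * sqrt chi).
      { rewrite hVx1.
        apply Rle_trans with (2 * A * FF chi c f f1 x1).
        - apply Rmult_le_compat_r; lra.
        - assert (2 * sqrt chi * QF chi c f f1 0 <= 2 * sqrt chi * K) by nra.
          nra. }
      apply Rmult_le_reg_r with beta; [lra|].
      replace (64 * A * K / beta * sqrt chi * beta) with (64 * A * K * sqrt chi) by (field; lra).
      lra.
Qed.

Lemma ex_RInt_cont (E : R -> R) a b : (forall x, continuous E x) -> ex_RInt E a b.
Proof. intro h. apply (ex_RInt_continuous (V:=R_CompleteNormedModule)). intros; apply h. Qed.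

Lemma FTC_gen (E h dh : R -> R) a b : a < b -> (forall x, continuous E x) ->
  (forall x, a <= x <= b -> derivable_pt_lim h x (dh x)) ->
  (forall x, a < x < b -> dh x = E x) -> RInt E a b = h b - h a.
Proof.
  intros hab hE hh he.
  set (G := fun t => RInt E a t - h t).
  assert (hG : forall t, a <= t <= b -> derivable_pt_lim G t (E t - dh t)).
  { intros t ht. apply is_derive_Reals. unfold G.
    apply (is_derive_minus (fun t => RInt E a t) h).
    - apply (is_derive_RInt E (fun t => RInt E a t) a t).
      + apply filter_forall. intro b0. apply (RInt_correct (V:=R_CompleteNormedModule)). apply ex_RInt_cont; auto.
      + apply hE.
    - apply is_derive_Reals; auto. }
  destruct (MVT_cor2 G (fun t => E t - dh t) a b hab hG) as [z [hz1 hz2]].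
  rewrite he in hz1 by auto. unfold G in hz1. rewrite RInt_point in hz1.
  change (zero : R) with 0 in hz1. lra.
Qed.

Lemma cont_of_der (f f1 : R -> R) : (forall y, derivable_pt_lim f y (f1 y)) ->
  forall x, continuous f x.
Proof.
  intros h x. apply continuity_pt_filterlim. apply derivable_continuous_pt.
  exists (f1 x). apply h.
Qed.

Lemma int_zero (E : R -> R) a b x0 : (forall x, continuous E x) ->
  (forall x, a < x < b -> 0 <= E x) -> RInt E a b <= 0 -> a < x0 < b -> E x0 <= 0.
Proof.
  intros hc hpos hI hx. destruct (Rle_dec (E x0) 0) as [h|h]; [exact h|exfalso].
  apply Rnot_le_lt in h.
  assert (hcp : continuity_pt E x0) by (apply continuity_pt_filterlim; apply hc).
  destruct (hcp (E x0 / 2)) as [d [hd hd2]]; [lra|].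
  set (a' := Rmax a (x0 - d/2)). set (b' := Rmin b (x0 + d/2)).
  assert (ha' : a <= a' < x0) by (unfold a'; apply Rmax_case_strong; intros; lra).
  assert (hb' : x0 < b' <= b) by (unfold b'; apply Rmin_case_strong; intros; lra).
  assert (hin : forall y, a' <= y <= b' -> Rabs (y - x0) < d).
  { intros y hy. unfold a', b' in hy. revert hy.
    apply Rmax_case_strong; apply Rmin_case_strong; intros; apply Rabs_def1; lra. }
  assert (hmid : 0 < RInt E a' b').
  { apply RInt_gt_0; [lra| |intros; apply hc].
    intros y hy. destruct (Req_dec y x0) as [->|hne]; [lra|].
    assert (Rabs (E y - E x0) < E x0 / 2).
    { apply hd2. split; [split; [exact I|auto]|]. simpl. unfold R_dist. apply hin; lra. }
    apply Rabs_def2 in H. lra. }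
  assert (hex : forall u v, ex_RInt E u v) by (intros; apply ex_RInt_cont; auto).
  assert (h1 : 0 <= RInt E a a') by (apply RInt_ge_0; [lra|auto|intros; apply hpos; lra]).
  assert (h3 : 0 <= RInt E b' b) by (apply RInt_ge_0; [lra|auto|intros; apply hpos; lra]).
  rewrite <- (RInt_Chasles E a a' b), <- (RInt_Chasles E a' b' b) in hI by auto.
  change (plus (RInt E a a') (plus (RInt E a' b') (RInt E b' b)))
    with (RInt E a a' + (RInt E a' b' + RInt E b' b)) in hI. lra.
Qed.

Lemma cont_bound_l (g : R -> R) a b B : a < b -> continuity_pt g a ->
  (forall y, a < y <= b -> Rabs (g y) <= B) -> Rabs (g a) <= B.
Proof.
  intros hab hc hb. destruct (Rle_dec (Rabs (g a)) B) as [h|h]; [exact h|].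
  exfalso. apply Rnot_le_lt in h.
  destruct (hc (Rabs (g a) - B)) as [d [hd hd2]]; [lra|].
  set (y := Rmin b (a + d/2)).
  assert (hy1 : a < y <= b) by (unfold y; apply Rmin_case_strong; intros; lra).
  assert (hy2 : Rabs (y - a) < d).
  { unfold y; apply Rmin_case_strong; intros; rewrite Rabs_right; lra. }
  specialize (hd2 y). simpl in hd2. unfold R_dist in hd2.
  assert (Rabs (g y - g a) < Rabs (g a) - B).
  { apply hd2. split; [unfold D_x, no_cond; split; [auto|lra]|exact hy2]. }
  specialize (hb y hy1).
  pose proof (Rabs_triang_inv (g a) (g y)).
  rewrite Rabs_minus_sym in H. lra.
Qed.

Lemma sol_refl chi c f f1 f2 : sol chi c f f1 f2 ->
  sol chi c (fun y => f (- y)) (fun y => - f1 (- y)) (fun y => f2 (- y)).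
Proof.
  intros [h1 [h2 h3]]. split; [|split].
  - intro y. apply is_derive_Reals.
    apply (is_derive_ext (fun y => f (-y))); [reflexivity|].
    replace (- f1 (- y)) with ((-1) * f1 (-y)) by ring.
    apply (is_derive_comp f (fun y => - y)).
    + apply is_derive_Reals. apply h1.
    + auto_derive; auto.
  - intro y. apply is_derive_Reals.
    replace (f2 (- y)) with (- ((-1) * f2 (-y))) by ring.
    apply (is_derive_opp (fun y => f1 (- y))).
    apply (is_derive_comp f1 (fun y => - y)).
    + apply is_derive_Reals. apply h2.
    + auto_derive; auto.
  - intros y hy. specialize (h3 (- y) ltac:(lra)).
    replace ((- y) ^ 2) with (y ^ 2) in h3 by ring. lra.
Qed.

Lemma Rpower54 x : 0 < x -> Rpower x (5/4) = x * sqrt (sqrt x).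
Proof.
  intro h. replace (5/4) with (1 + /2 * /2) by field.
  rewrite Rpower_plus, Rpower_1 by auto. rewrite <- Rpower_mult.
  rewrite (Rpower_sqrt x) by auto. rewrite (Rpower_sqrt (sqrt x)) by (apply sqrt_lt_R0; auto).
  reflexivity.
Qed.

Lemma final_A chi M CM g : 1 <= chi -> 0 <= M -> 0 <= CM -> M ^ 2 <= CM * sqrt chi ->
  Rabs g <= chi * M -> Rabs g <= sqrt CM * Rpower chi (5/4).
Proof.
  intros hchi hM hCM hM2 hg. rewrite Rpower54 by lra.
  assert (hs : 0 <= sqrt chi) by apply sqrt_pos.
  assert (hMle : M <= sqrt CM * sqrt (sqrt chi)).
  { rewrite <- sqrt_mult by auto. rewrite <- (sqrt_pow2 M hM). apply sqrt_le_1_alt. lra. }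
  apply Rle_trans with (chi * M); [auto|]. nra.
Qed.

Lemma final_B K chi x g : 0 <= K -> 0 <= chi -> (1 - x^2) * Rabs g <= sqrt (K * chi) ->
  sqrt K <= sqrt K -> (1 - x^2) * Rabs g <= sqrt K * sqrt chi.
Proof. intros hK hc h _. rewrite <- sqrt_mult; auto. Qed.

Lemma QF_le chi c f f1 x b : 0 < b -> b <= chi - c^2*x^2 -> -1 <= x <= 1 ->
  QF chi c f f1 x <= f x ^ 2 + 1 / b * ((1 - x^2) * f1 x ^ 2).
Proof.
  intros hb hq hx. unfold QF. apply Rplus_le_compat_l.
  assert (0 <= (1 - x^2) * f1 x ^ 2) by (apply Rmult_le_pos; [apply one_m_sq; auto|apply pow2_ge_0]).
  unfold Rdiv. rewrite Rmult_comm. apply Rmult_le_compat_r; [auto|].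
  rewrite Rmult_1_l. apply Rinv_le_contravar; auto.
Qed.

Ltac contt := apply (ex_derive_continuous (K:=R_AbsRing) (V:=R_NormedModule)); auto_derive;
  repeat split; try (eapply exd; eauto).

Theorem proposition3 (alpha : R) (halpha : 0 < alpha < 1) :
  exists C : R,
    forall (c : R) (n : nat) (chi : R) (psi dpsi : R -> R),
      0 <= c ->
      is_pswf c n chi psi ->
      (forall x, derivable_pt_lim psi x (dpsi x)) ->
      c ^ 2 / chi < alpha ->
      (forall x, -1 <= x <= 1 -> Rabs (dpsi x) <= C * Rpower chi (5 / 4)) /\
      (forall x, -1 <= x <= 1 -> (1 - x ^ 2) * Rabs (dpsi x) <= C * sqrt chi).
Proof.
  set (beta := 1 - alpha).
  assert (hb : 0 < beta <= 1) by (unfold beta; lra).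
  set (K := (1 + 1 / beta) / 2).
  assert (hK : 0 <= K) by (unfold K; assert (0 < 1/beta) by (apply Rdiv_lt_0_compat; lra); lra).
  set (CM := 64 * (4 / beta^3) * K / beta).
  assert (hCM : 0 <= CM).
  { unfold CM. assert (0 < beta^3) by (apply pow_lt; lra).
    assert (0 < 4 / beta^3) by (apply Rdiv_lt_0_compat; lra).
    unfold Rdiv. apply Rmult_le_pos; [|left; apply Rinv_0_lt_compat; lra].
    apply Rmult_le_pos; [|auto]. apply Rmult_le_pos; lra. }
  assert (hKdef : K = (1 + 1 / beta) / 2) by reflexivity.
  assert (hCMdef : CM = 64 * (4 / beta^3) * K / beta) by reflexivity.
  assert (hbdef : beta = 1 - alpha) by reflexivity.
  clearbody CM K beta.
  exists (Rmax (sqrt K) (sqrt CM)).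
  intros c n chi psi dpsi hc hp hd hratio.
  assert (hC0 : 0 <= Rmax (sqrt K) (sqrt CM)) by (apply Rle_trans with (sqrt K); [apply sqrt_pos|apply Rmax_l]).
  destruct hp as [_ [[d1 [d2 [h1 [h2 h3]]]] [[pr hI] [hpar hp1]]]].
  assert (hsol : sol chi c psi d1 d2) by (split; [|split]; auto).
  assert (e : forall x, dpsi x = d1 x) by (intro x; eapply uniqueness_limite; eauto).
  assert (suff : (forall x, -1 <= x <= 1 -> Rabs (d1 x) <= Rmax (sqrt K) (sqrt CM) * Rpower chi (5 / 4)) /\
      (forall x, -1 <= x <= 1 -> (1 - x ^ 2) * Rabs (d1 x) <= Rmax (sqrt K) (sqrt CM) * sqrt chi)).
  2:{ destruct suff as [s1 s2]. split; intros x hx; rewrite e; auto. }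
  rewrite <- (RInt_Reals _ _ _ pr) in hI.
  assert (cpsi : forall x, continuous psi x) by (apply (cont_of_der psi d1); auto).
  assert (cd1 : forall x, continuous d1 x) by (apply (cont_of_der d1 d2); auto).
  remember (RInt (fun x => (1 - x^2) * d1 x ^ 2) (-1) 1) as I1 eqn:hI1.
  remember (RInt (fun x => (chi - c^2*x^2) * psi x ^ 2) (-1) 1) as I2 eqn:hI2.
  assert (hE : I1 = I2).
  { assert (h0 : RInt (fun x => (1 - x^2) * d1 x ^ 2 - (chi - c^2*x^2) * psi x ^ 2) (-1) 1 = 0).
    { rewrite (FTC_gen _ (fun x => psi x * ((1 - x^2) * d1 x)) (fwd psi d1 d2)); [match goal with |- ?a = ?b => change (@eq R a b) end; ring| lra | | |].
      - intro x. contt.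
      - intros x _. apply is_derive_Reals.
        apply (prod_gen psi (fun y => (1 - y^2) * d1 y)).
        + apply is_derive_Reals; auto.
        + apply is_derive_Reals. exact (w_der chi c psi d1 d2 x hsol).
      - intros x hx. unfold fwd, dwF. specialize (h3 x hx).
        replace (-2 * x * d1 x + (1 - x ^ 2) * d2 x) with (- ((chi - c^2*x^2) * psi x)) by lra.
        ring. }
    subst I1 I2.
    assert (hm := RInt_minus (V:=R_CompleteNormedModule) (fun x => (1 - x^2) * d1 x ^ 2)
       (fun x => (chi - c^2*x^2) * psi x ^ 2) (-1) 1).
    change (minus ?a ?b) with (a - b) in hm.
    rewrite hm in h0.
    - lra.
    - apply ex_RInt_cont. intro x. contt.
    - apply ex_RInt_cont. intro x. contt. }
  assert (hI1p : 0 <= I1).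
  { subst I1. apply RInt_ge_0; [lra| |].
    - apply ex_RInt_cont. intro x. contt.
    - intros x hx. apply Rmult_le_pos; [apply one_m_sq; lra|apply pow2_ge_0]. }
  assert (hI2le : I2 <= chi).
  { subst I2. apply Rle_trans with (RInt (fun x => scal chi (psi x ^ 2)) (-1) 1).
    - apply RInt_le; [lra| | |].
      + apply ex_RInt_cont. intro x. contt.
      + apply ex_RInt_cont. intro x. unfold scal; simpl; unfold mult; simpl. contt.
      + intros x hx. unfold scal; simpl; unfold mult; simpl.
        apply Rmult_le_compat_r; [apply pow2_ge_0|].
        assert (0 <= c^2 * x^2) by (apply Rmult_le_pos; apply pow2_ge_0). lra.
    - rewrite (RInt_scal (V:=R_CompleteNormedModule)).
      + rewrite hI. unfold scal; simpl; unfold mult; simpl. lra.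
      + apply ex_RInt_cont. intro x. contt. }
  destruct (Rtotal_order chi 0) as [hneg | [hzero | hpos]].
  { exfalso. lra. }
  {
    subst chi.
    assert (hz : forall x, -1 < x < 1 -> d1 x = 0).
    { intros x hx.
      assert (hle : (fun x => (1 - x^2) * d1 x ^ 2) x <= 0).
      { apply (int_zero (fun x => (1 - x^2) * d1 x ^ 2) (-1) 1 x); auto.
        - intro y. contt.
        - intros y hy. cbv beta. apply Rmult_le_pos; [apply one_m_sq; lra|apply pow2_ge_0].
        - rewrite <- hI1. lra. }
      cbv beta in hle.
      assert (hp : 0 < 1 - x^2) by (replace (1 - x^2) with ((1-x)*(1+x)) by ring;
                                     apply Rmult_lt_0_compat; lra).
      assert (d1 x ^ 2 <= 0).
      { apply Rmult_le_reg_l with (1 - x^2); [lra|]. lra. }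
      assert (hh : d1 x * d1 x = 0) by (pose proof (pow2_ge_0 (d1 x)); simpl in *; lra).
      destruct (Rmult_integral _ _ hh); auto. }
    assert (hz' : forall x, -1 <= x <= 1 -> Rabs (d1 x) <= 0).
    { intros x hx.
      assert (hc1 : forall y, continuity_pt d1 y)
        by (intro y; apply derivable_continuous_pt; exists (d2 y); apply h2).
      destruct (Req_dec x 1) as [->|hne1].
      - apply (cont_bound d1 0 1); [lra|auto|]. intros y hy.
        rewrite hz by lra. rewrite Rabs_R0; lra.
      - destruct (Req_dec x (-1)) as [->|hne2].
        + apply (cont_bound_l d1 (-1) 0); [lra|auto|]. intros y hy.
          rewrite hz by lra. rewrite Rabs_R0; lra.
        + rewrite hz by lra. rewrite Rabs_R0; lra. }
    split; intros x hx; specialize (hz' x hx); pose proof (Rabs_pos (d1 x)).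
    - assert (0 < Rpower 0 (5/4)) by (unfold Rpower; apply exp_pos). nra.
    - rewrite sqrt_0. assert (0 <= 1 - x^2) by (apply one_m_sq; lra). nra. }
  assert (hc2 : c^2 < alpha * chi).
  { apply Rmult_lt_compat_r with (r:=chi) in hratio; [|lra].
    unfold Rdiv in hratio. rewrite Rmult_assoc, Rinv_l, Rmult_1_r in hratio by lra. lra. }
  assert (hbc : 0 < beta * chi) by (apply Rmult_lt_0_compat; lra).
  assert (hq : forall y, -1 <= y <= 1 -> beta * chi <= chi - c^2*y^2).
  { intros y hy. assert (y^2 <= 1) by (pose proof (one_m_sq y hy); lra).
    assert (c^2 * y^2 <= c^2).
    { assert (0 <= c^2) by apply pow2_ge_0. 
      replace (c^2) with (c^2 * 1) at 2 by ring. apply Rmult_le_compat_l; auto. }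
    replace (beta * chi) with (chi - alpha * chi) by (rewrite hbdef; ring). lra. }
  assert (hqp : forall y, 0 <= y <= 1 -> 0 < chi - c^2*y^2).
  { intros y hy. specialize (hq y ltac:(lra)). lra. }
  pose proof (sol_refl chi c psi d1 d2 hsol) as hsolr.
  destruct (half0 chi c psi d1 d2 hsol hpos hqp) as [hf [hf1 [hfd hQ]]].
  destruct (half0 chi c (fun y => psi (-y)) (fun y => - d1 (-y)) (fun y => d2 (-y)) hsolr hpos hqp)
    as [hfr [hf1r [hfdr hQr]]].
  assert (hQeq : QF chi c (fun y => psi (-y)) (fun y => - d1 (-y)) 0 = QF chi c psi d1 0)
    by (unfold QF; cbv beta; rewrite Ropp_0; replace ((- d1 0)^2) with (d1 0 ^ 2) by ring; reflexivity).
  assert (hQlow : forall x, -1 <= x <= 1 ->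
     QF chi c psi d1 0 <= psi x ^ 2 + 1 / (beta * chi) * ((1 - x^2) * d1 x ^ 2)).
  { intros x hx. destruct (Rle_dec 0 x) as [hx0|hx0].
    - apply Rle_trans with (QF chi c psi d1 x); [apply hQ; lra|].
      apply QF_le; auto.
    - specialize (hQr (- x) ltac:(lra)). rewrite hQeq in hQr.
      apply Rle_trans with (1 := hQr). unfold QF. rewrite Ropp_involutive.
      replace ((- x) ^ 2) with (x ^ 2) by ring. replace ((- d1 x) ^ 2) with (d1 x ^ 2) by ring.
      apply (QF_le chi c psi d1 x (beta * chi)); auto. }
  assert (hK0 : QF chi c psi d1 0 <= K).
  { assert (hint : RInt (fun _ => QF chi c psi d1 0) (-1) 1 <=
       RInt (fun x => plus (psi x ^ 2) (scal (1 / (beta * chi)) ((1 - x^2) * d1 x ^ 2))) (-1) 1).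
    { apply RInt_le; [lra| | |].
      - apply ex_RInt_cont. intro x. apply continuous_const.
      - apply ex_RInt_cont. intro x. unfold plus, scal; simpl; unfold mult; simpl. contt.
      - intros x hx. unfold plus, scal; simpl; unfold mult; simpl. apply hQlow; lra. }
    rewrite RInt_const in hint.
    rewrite (RInt_plus (V:=R_CompleteNormedModule)) in hint.
    2:{ apply ex_RInt_cont. intro x. contt. }
    2:{ apply ex_RInt_cont. intro x. unfold scal; simpl; unfold mult; simpl. contt. }
    rewrite (RInt_scal (V:=R_CompleteNormedModule)) in hint.
    2:{ apply ex_RInt_cont. intro x. contt. }
    rewrite <- hI1, hI in hint. unfold plus, scal in hint; simpl in hint; unfold mult in hint; simpl in hint.
    assert (1 / (beta * chi) * I1 <= 1 / beta).
    { replace (1 / beta) with (1 / (beta * chi) * chi) by (field; lra).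
      apply Rmult_le_compat_l; [left; apply Rdiv_lt_0_compat; lra|lra]. }
    rewrite hKdef. lra. }
  assert (hpar1 : psi (-1) = (-1)^n * psi 1) by (apply hpar; lra).
  assert (hpar0 : psi 0 = (-1)^n * psi 0) by (rewrite <- hpar by lra; rewrite Ropp_0; auto).
  assert (habs1 : Rabs (psi (-1)) = psi 1).
  { rewrite hpar1, Rabs_mult, pow_1_abs, Rmult_1_l. apply Rabs_right; lra. }
  assert (hpsi1 : Rabs (psi 1) = psi 1) by (apply Rabs_right; lra).
  assert (em1 : - (1) = -1) by ring.
  destruct (Rlt_le_dec chi 1) as [hsmall | hge1].
  { exfalso.
    destruct (Req_dec (psi 1) 0) as [hM0 | hM0].
    - assert (hz : forall x, -1 <= x <= 1 -> psi x = 0).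
      { intros x hx. destruct (Rle_dec 0 x) as [hx0|hx0].
        + specialize (hf x ltac:(lra)). rewrite hpsi1, hM0 in hf.
          pose proof (Rabs_pos (psi x)). apply Rabs_eq_0. lra.
        + specialize (hfr (-x) ltac:(lra)). cbv beta in hfr.
          rewrite Ropp_involutive, em1, habs1, hM0 in hfr.
          pose proof (Rabs_pos (psi x)). apply Rabs_eq_0. lra. }
      rewrite (RInt_ext _ (fun _ => 0)) in hI.
      + rewrite RInt_const in hI. unfold scal in hI; simpl in hI; unfold mult in hI; simpl in hI. lra.
      + intros x hx. rewrite Rmin_left, Rmax_right in hx by lra. rewrite hz by lra. match goal with |- ?a = ?b => change (@eq R a b) end; ring.
    - assert (hMp : 0 < psi 1) by lra.
      destruct (Nat.Even_or_Odd n) as [[k hk]|[k hk]]; subst n.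
      + rewrite pow_1_even, Rmult_1_l in hpar1.
        assert (hposi : forall y, -1 <= y <= 1 -> 0 < psi y).
        { intros y hy. destruct (Rle_dec 0 y) as [hy0|hy0].
          - specialize (hfd y ltac:(lra)). rewrite hpsi1 in hfd.
            assert (chi * psi 1 * (1 - y) < psi 1).
            { assert (h0 : 0 <= chi * psi 1) by (apply Rmult_le_pos; lra).
              assert (chi * psi 1 * (1 - y) <= chi * psi 1 * 1) by (apply Rmult_le_compat_l; lra).
              assert (chi * psi 1 < 1 * psi 1) by (apply Rmult_lt_compat_r; lra). lra. }
            assert (hh : Rabs (psi y - psi 1) < psi 1) by lra. apply Rabs_def2 in hh. lra.
          - specialize (hfdr (-y) ltac:(lra)). cbv beta in hfdr.
            rewrite Ropp_involutive, em1, hpar1, hpsi1 in hfdr.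
            assert (chi * psi 1 * (1 - - y) < psi 1).
            { assert (h0 : 0 <= chi * psi 1) by (apply Rmult_le_pos; lra).
              assert (chi * psi 1 * (1 - - y) <= chi * psi 1 * 1) by (apply Rmult_le_compat_l; lra).
              assert (chi * psi 1 < 1 * psi 1) by (apply Rmult_lt_compat_r; lra). lra. }
            assert (hh : Rabs (psi y - psi 1) < psi 1) by lra. apply Rabs_def2 in hh. lra. }
        destruct (MVT_cor2 (fun y => (1 - y^2) * d1 y) (dwF d1 d2) (-1) 1) as [z [hz1 hz2]].
        { lra. }
        { intros; apply (w_der chi c psi d1 d2); auto. }
        unfold dwF in hz1. specialize (h3 z hz2). specialize (hposi z ltac:(lra)).
        specialize (hq z ltac:(lra)).
        assert (0 < (chi - c^2*z^2) * psi z) by (apply Rmult_lt_0_compat; lra).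
        replace ((1 - 1^2) * d1 1 - (1 - (-1)^2) * d1 (-1)) with 0 in hz1 by ring.
        lra.
      + replace (2 * k + 1)%nat with (S (2 * k)) in hpar0 by lia. rewrite pow_1_odd in hpar0.
        assert (hp0 : psi 0 = 0) by lra.
        specialize (hfd 0 ltac:(lra)). rewrite hp0, hpsi1 in hfd.
        rewrite Rminus_0_l, Rabs_Ropp, hpsi1 in hfd.
        assert (chi * psi 1 * (1 - 0) < 1 * psi 1) by (rewrite Rminus_0_r, Rmult_1_r; apply Rmult_lt_compat_r; lra).
        lra. }
  assert (hq01 : forall y, 0 <= y <= 1 -> beta * chi <= chi - c^2*y^2) by (intros; apply hq; lra).
  destruct (half chi c psi d1 d2 beta K hsol hb hge1 hq01 hc hK0) as [hB hM].
  destruct (half chi c (fun y => psi (-y)) (fun y => - d1 (-y)) (fun y => d2 (-y)) beta K hsolr hb hge1 hq01 hc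
     ltac:(rewrite hQeq; exact hK0)) as [hBr hMr].
  rewrite <- hCMdef in hM, hMr.
  assert (hRp : 0 <= Rpower chi (5/4)) by (unfold Rpower; left; apply exp_pos).
  assert (hsc : 0 <= sqrt chi) by apply sqrt_pos.
  split; intros x hx.
  - apply Rle_trans with (sqrt CM * Rpower chi (5/4)).
    + destruct (Rle_dec 0 x) as [hx0|hx0].
      * apply (final_A chi (Rabs (psi 1)) CM (d1 x)); [lra|apply Rabs_pos|lra|exact hM|apply hf1; lra].
      * replace (d1 x) with (- ((fun y => - d1 (- y)) (- x))) by (cbv beta; rewrite !Ropp_involutive; reflexivity).
        rewrite Rabs_Ropp.
        apply (final_A chi (Rabs ((fun y => psi (-y)) 1)) CM); [lra|apply Rabs_pos|lra|exact hMr|apply hf1r; lra].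
    + apply Rmult_le_compat_r; [auto|apply Rmax_r].
  - apply Rle_trans with (sqrt K * sqrt chi).
    + rewrite <- sqrt_mult by lra.
      destruct (Rle_dec 0 x) as [hx0|hx0].
      * apply hB; lra.
      * specialize (hBr (-x) ltac:(lra)). cbv beta in hBr.
        rewrite Ropp_involutive, Rabs_Ropp in hBr.
        replace ((- x) ^ 2) with (x ^ 2) in hBr by ring. exact hBr.
    + apply Rmult_le_compat_r; [auto|apply Rmax_l].
Qed.
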